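(* Assume $N\ge n$. For every matrix $U\in\mathbb{R}^{n\times N}$ with $UU^T=I_n$, the coefficient matrix $$F=\begin{bmatrix}\mathbb{E}[f(\Delta)] & L\,U\,W_1^{-1/2}\end{bmatrix}\in\mathbb{R}^{n\times(N+1)}$$ yields a PC approximation $\hat f(\Delta)=F\Phi(\Delta)$ with exact first and second moments, i.e. $$\mathbb{E}[\hat f(\Delta)]=\mathbb{E}[f(\Delta)],\qquad \mathbb{E}[\hat f(\Delta)\hat f(\Delta)^T]=F W F^T=\mathbb{E}[f(\Delta)f(\Delta)^T].$$ Conversely, every $F\in\mathbb{R}^{n\times(N+1)}$ satisfying these two moment equalities is of this form for some $U\in\mathbb{R}^{n\times N}$ with $UU^T=I_n$.
   Context: Let $\Delta$ be a random vector taking values in $D\subseteq\mathbb{R}^d$ with probability density $p$, and $\mathbb{E}[g(\Delta)]=\int_D g(\Delta)p(\Delta)\,d\Delta$. Let $f:D\to\mathbb{R}^n$ have square-integrable components. Let $\phi_0\equiv 1,\phi_1,\dots,\phi_N$ be polynomials on $D$, orthogonal with respect to $p$: $\mathbb{E}[\phi_i(\Delta)\phi_j(\Delta)]=0$ for $i\neq j$, with $\mathbb{E}[\phi_i(\Delta)^2]>0$ for all $i$. Set $\Phi(\Delta)=[\phi_0(\Delta),\dots,\phi_N(\Delta)]^T$ (so $\mathbb{E}[\Phi(\Delta)]=[1,0,\dots,0]^T$), $W=\mathbb{E}[\Phi\Phi^T]=\mathrm{diag}(\mathbb{E}[\phi_0^2],\dots,\mathbb{E}[\phi_N^2])$, and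 $W_1=\mathrm{diag}(\mathbb{E}[\phi_1^2],\dots,\mathbb{E}[\phi_N^2])$. A PC approximation of $f$ with coefficient matrix $F\in\mathbb{R}^{n\times(N+1)}$ is $\hat f(\Delta)=F\Phi(\Delta)$. Let $L\in\mathbb{R}^{n\times n}$ be any matrix (e.g. a Cholesky factor) with $LL^T=\mathbb{E}[f f^T]-\mathbb{E}[f]\mathbb{E}[f]^T$ (the covariance of $f(\Delta)$). *)

(* Defs.v *)
From HB Require Import structures.
From mathcomp Require Import all_boot all_order all_algebra.
Set Implicit Arguments. Unset Strict Implicit. Unset Printing Implicit Defensive.
Import Order.TTheory GRing.Theory Num.Theory.
Local Open Scope ring_scope.

Definition Emx (R : rcfType) (T : Type) (E : (T -> R) -> R) (a b : nat)
  (M : T -> 'M[R]_(a, b)) : 'M[R]_(a, b) :=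
  \matrix_(i, j) E (fun x => M x i j).

Definition PhiV (R : rcfType) (T : Type) (N : nat) (phi : 'I_N.+1 -> T -> R)
  (x : T) : 'cV[R]_N.+1 := \col_i phi i x.

Definition fV (R : rcfType) (T : Type) (n : nat) (f : 'I_n -> T -> R)
  (x : T) : 'cV[R]_n := \col_i f i x.

Definition Wmx (R : rcfType) (T : Type) (E : (T -> R) -> R) (N : nat)
  (phi : 'I_N.+1 -> T -> R) : 'M[R]_N.+1 :=
  Emx E (fun x => PhiV phi x *m (PhiV phi x)^T).

Definition W1isqrt (R : rcfType) (T : Type) (E : (T -> R) -> R) (N : nat)
  (phi : 'I_N.+1 -> T -> R) : 'M[R]_N :=
  diag_mx (\row_(i < N) (Num.sqrt (E (fun x => phi (lift ord0 i) x ^+ 2)))^-1).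

Definition PCcoef (R : rcfType) (n N : nat) (Ef : 'cV[R]_n) (L : 'M[R]_n)
  (U : 'M[R]_(n, N)) (W1is : 'M[R]_N) : 'M[R]_(n, N.+1) :=
  row_mx Ef (L *m U *m W1is).

(* Main.v *)
Require Import Defs.
From HB Require Import structures.
From mathcomp Require Import all_boot all_order all_algebra.
From mathcomp Require Import ring lra.
From Stdlib Require Import FunctionalExtensionality.
Set Implicit Arguments. Unset Strict Implicit.
Import Order.TTheory GRing.Theory Num.Theory.
Local Open Scope ring_scope.

Section Gram.
Variable R : rcfType.

Definition dot (N : nat) (u v : 'rV[R]_N) : R := \sum_j u 0 j * v 0 j.

Lemma dotE N (u v : 'rV[R]_N) : u *m v^T = (dot u v)%:M.
Proof.
rewrite [LHS]mx11_scalar; congr (_ %:M); rewrite !mxE /dot.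
by apply: eq_bigr => j _; rewrite !mxE.
Qed.

Lemma dot_row n m N (A : 'M[R]_(n, N)) (B : 'M[R]_(m, N)) i j :
  (A *m B^T) i j = dot (row i A) (row j B).
Proof. by rewrite !mxE /dot; apply: eq_bigr => l _; rewrite !mxE. Qed.

Lemma dotC N (u v : 'rV[R]_N) : dot u v = dot v u.
Proof. by apply: eq_bigr => j _; rewrite mulrC. Qed.

Lemma dotBl N (u v z : 'rV[R]_N) : dot (u - v) z = dot u z - dot v z.
Proof. by rewrite /dot -sumrB; apply: eq_bigr => j _; rewrite !mxE mulrBl. Qed.

Lemma dotBr N (u v z : 'rV[R]_N) : dot z (u - v) = dot z u - dot z v.
Proof. by rewrite dotC dotBl !(dotC z). Qed.

Lemma dot_self_eq0 N (u : 'rV[R]_N) : dot u u = 0 -> u = 0.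
Proof.
move=> h; have H := psumr_eq0P (fun j (_ : true) => (ltac:(rewrite -expr2; exact: sqr_ge0) : 0 <= u 0 j * u 0 j)) h.
apply/rowP => j; rewrite mxE.
by have /eqP := H j isT; rewrite mulf_eq0 orbb => /eqP.
Qed.

Lemma gram_orth n N (A B : 'M[R]_(n, N)) :
  A *m A^T = B *m B^T -> exists Q : 'M[R]_N, Q *m Q^T = 1%:M /\ A = B *m Q.
Proof.
move=> hAB.
suff: forall k, (k <= n)%N -> exists Q : 'M[R]_N, Q *m Q^T = 1%:M /\
   forall i : 'I_n, (i < k)%N -> row i (B *m Q) = row i A.
  case/(_ n (leqnn n)) => Q [hQ hr]; exists Q; split => //.
  by apply/row_matrixP => i; rewrite hr.
elim=> [|k IH] hk.
  by exists 1%:M; rewrite trmx1 mulmx1; split.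
have [Q [hQ hr]] := IH (ltnW hk).
set B' := B *m Q.
have hB' : A *m A^T = B' *m B'^T.
  by rewrite /B' trmx_mul mulmxA -(mulmxA B) hQ mulmx1.
pose i0 : 'I_n := Ordinal hk.
set a := row i0 A; set b := row i0 B'; set w := a - b.
have rowk : forall i : 'I_n, (i < k.+1)%N -> (i < k)%N \/ i = i0.
  move=> i; rewrite ltnS leq_eqVlt => /orP[/eqP hi|hi]; last by left.
  by right; apply: val_inj.
have [hw|hw] := eqVneq w 0.
  exists Q; split => // i /rowk [hi|->]; first exact: hr.
  by apply/eqP; rewrite -subr_eq0 -/b -/a -oppr_eq0 opprB -/w hw.
set c := dot w w.
have c0 : c != 0 by apply/eqP => /dot_self_eq0; apply/eqP.
pose k' := 2 / c.
pose H := 1%:M - k' *: (w^T *m w).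
have Hu : forall u, u *m H = u - (k' * dot u w) *: w.
  by move=> u; rewrite /H mulmxBr mulmx1 -scalemxAr mulmxA dotE mul_scalar_mx scalerA.
have HT : H^T = H by rewrite /H linearB /= linearZ /= trmx_mul trmxK trmx1.
have HH : H *m H = 1%:M.
  have PP : (w^T *m w) *m (w^T *m w) = c *: (w^T *m w).
    by rewrite mulmxA -(mulmxA w^T) dotE mul_mx_scalar scalemxAl.
  rewrite /H; move: PP; move: (w^T *m w) => P PP.
  rewrite mulmxBl !mulmxBr !mul1mx !mulmx1 -!scalemxAl -!scalemxAr PP !scalerA.
  have -> : k' * k' * c = k' + k' by rewrite /k' -mulrA divfK //; field.
  rewrite scalerDl; set X := k' *: P.
  have -> : X - (X + X) = - X by rewrite opprD addrA subrr sub0r.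
  by rewrite opprK subrK.
exists (Q *m H); split.
  by rewrite trmx_mul HT mulmxA -(mulmxA Q) HH mulmx1.
have dotA : forall i j, dot (row i A) (row j A) = dot (row i B') (row j B').
  by move=> i j; rewrite -!dot_row hB'.
move=> i /rowk [hi|->]; rewrite mulmxA row_mul Hu -/B'.
  have hri := hr i hi; rewrite -/B' in hri.
  have -> : dot (row i B') w = 0.
    rewrite /w dotBr hri /b dotA -hri subrr //.
  by rewrite mulr0 scale0r subr0.
have -> : k' * dot b w = -1.
  have hc : c = - (2 * dot b w).
    rewrite /c /w !dotBl !dotBr /a /b dotA (dotC (row i0 B')).
    by rewrite -/b; ring.
  have bw0 : dot b w != 0 by apply: contraNneq c0 => h; rewrite hc h mulr0 oppr0.
  by rewrite /k' hc; field.
by rewrite scaleN1r opprK /w addrC subrK.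
Qed.
End Gram.

Section Expect.
Variables (R : rcfType) (T : Type) (E : (T -> R) -> R).
Hypothesis E_add : forall g h : T -> R, E (fun x => g x + h x) = E g + E h.
Hypothesis E_scale : forall (c : R) (g : T -> R), E (fun x => c * g x) = c * E g.

Lemma E_zero : E (fun _ => 0) = 0.
Proof.
transitivity (E (fun x => 0 * (fun _ : T => (0:R)) x)).
  by congr E; apply: functional_extensionality => x; rewrite mul0r.
by rewrite E_scale mul0r.
Qed.

Lemma E_sum m (g : 'I_m -> T -> R) :
  E (fun x => \sum_(k < m) g k x) = \sum_(k < m) E (g k).
Proof.
elim: m g => [|m IH] g.
  rewrite big_ord0; transitivity (E (fun _ => 0)); last exact: E_zero.
  by congr E; apply: functional_extensionality => x; rewrite big_ord0.
transitivity (E (fun x => (fun y => \sum_(k < m) g (widen_ord (leqnSn m) k) y) x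
   + g ord_max x)).
  by congr E; apply: functional_extensionality => x; rewrite big_ord_recr.
by rewrite E_add IH big_ord_recr.
Qed.

Lemma Emx_mull a b c (A : 'M[R]_(a, b)) (M : T -> 'M[R]_(b, c)) :
  Emx E (fun x => A *m M x) = A *m Emx E M.
Proof.
apply/matrixP => i j; rewrite !mxE.
transitivity (E (fun x => \sum_k (fun k y => A i k * M y k j) k x)).
  by congr E; apply: functional_extensionality => x; rewrite mxE.
rewrite E_sum; apply: eq_bigr => k _; by rewrite E_scale mxE.
Qed.

Lemma Emx_mulr a b c (A : 'M[R]_(b, c)) (M : T -> 'M[R]_(a, b)) :
  Emx E (fun x => M x *m A) = Emx E M *m A.
Proof.
apply/matrixP => i j; rewrite !mxE.
transitivity (E (fun x => \sum_k (fun k y => A k j * M y i k) k x)).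
  by congr E; apply: functional_extensionality => x; rewrite mxE;
     apply: eq_bigr => k _; rewrite mulrC.
rewrite E_sum; apply: eq_bigr => k _; by rewrite E_scale mxE mulrC.
Qed.
End Expect.

Theorem theorem1 (R : rcfType) (T : Type) (E : (T -> R) -> R)
  (E_add : forall g h : T -> R, E (fun x => g x + h x) = E g + E h)
  (E_scale : forall (c : R) (g : T -> R), E (fun x => c * g x) = c * E g)
  (E_one : E (fun _ => 1) = 1)
  (n N : nat) (phi : 'I_N.+1 -> T -> R)
  (phi0 : forall x, phi ord0 x = 1)
  (phi_orth : forall i j : 'I_N.+1, i != j -> E (fun x => phi i x * phi j x) = 0)
  (phi_pos : forall i : 'I_N.+1, 0 < E (fun x => phi i x ^+ 2))
  (f : 'I_n -> T -> R) (L : 'M[R]_n)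
  (hL : L *m L^T = Emx E (fun x => fV f x *m (fV f x)^T)
                   - Emx E (fV f) *m (Emx E (fV f))^T)
  (hNn : (n <= N)%N) :
  (forall U : 'M[R]_(n, N), U *m U^T = 1%:M ->
     let F := PCcoef (Emx E (fV f)) L U (W1isqrt E phi) in
     Emx E (fun x => F *m PhiV phi x) = Emx E (fV f) /\
     Emx E (fun x => (F *m PhiV phi x) *m (F *m PhiV phi x)^T)
       = F *m Wmx E phi *m F^T /\
     F *m Wmx E phi *m F^T = Emx E (fun x => fV f x *m (fV f x)^T)) /\
  (forall F : 'M[R]_(n, N.+1),
     Emx E (fun x => F *m PhiV phi x) = Emx E (fV f) ->
     Emx E (fun x => (F *m PhiV phi x) *m (F *m PhiV phi x)^T)
       = Emx E (fun x => fV f x *m (fV f x)^T) ->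
     exists U : 'M[R]_(n, N), U *m U^T = 1%:M /\
       F = PCcoef (Emx E (fV f)) L U (W1isqrt E phi)).
Proof.
have Eadd := E_add; have Esc := E_scale.
set Ef := Emx E (fV f).
pose w := fun i : 'I_N.+1 => E (fun x => phi i x ^+ 2).
have w0 : w ord0 = 1.
  by rewrite /w -E_one; congr E; apply: functional_extensionality => x; rewrite phi0 expr1n.
have Eph : Emx E (PhiV phi) = col_mx (1%:M : 'M[R]_1) (0 : 'M[R]_(N,1)).
  apply/matrixP => i j; rewrite mxE.
  transitivity (E (phi i)).
    by congr E; apply: functional_extensionality => x; rewrite mxE.
  rewrite -(@splitK 1 N i); case: (@split 1 N i) => k /=.
    rewrite mxE (@unsplitK 1 N (inl k)) /= !ord1 mxE eqxx.
    have -> : lshift N (ord0 : 'I_1) = ord0 :> 'I_N.+1 by apply: val_inj.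
    by rewrite -E_one; congr E; apply: functional_extensionality => x; rewrite phi0.
  rewrite mxE (@unsplitK 1 N (inr k)) /= mxE.
  have hk : rshift 1 k != ord0 :> 'I_N.+1 by [].
  have := phi_orth _ _ hk;
  by move=> <-; congr E; apply: functional_extensionality => x; rewrite phi0 mulr1.
pose W1 := diag_mx (\row_(i < N) w (lift ord0 i)).
have Wd : Wmx E phi = block_mx (1%:M : 'M[R]_1) 0 0 W1.
  have -> : Wmx E phi = diag_mx (row_mx (\row_(i < 1) (1:R)) (\row_(i < N) w (lift ord0 i))).
    apply/matrixP => i j; rewrite /Wmx mxE.
    transitivity (E (fun x => phi i x * phi j x)).
      by congr E; apply: functional_extensionality => x; rewrite !mxE big_ord1 !mxE.
    have -> : row_mx (\row_(i < 1) (1:R)) (\row_(i < N) w (lift ord0 i)) = \row_i w i.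
      apply/rowP => l; rewrite -(@splitK 1 N l); case: (@split 1 N l) => k /=.
        rewrite row_mxEl !mxE ord1.
        have -> : lshift N (ord0 : 'I_1) = ord0 :> 'I_N.+1 by apply: val_inj.
        by rewrite w0.
      rewrite row_mxEr !mxE.
      by have -> : lift ord0 k = rshift 1 k :> 'I_N.+1 by apply: val_inj.
    rewrite !mxE; case: eqVneq => [<-|hij].
      by rewrite mulr1n /w; congr E; apply: functional_extensionality => x; rewrite expr2.
    by rewrite mulr0n phi_orth.
  rewrite diag_mx_row.
  have -> : diag_mx (\row_(i < 1) (1:R)) = 1%:M by apply/matrixP => i j; rewrite !mxE !ord1.
  by [].
pose s := fun i : 'I_N => Num.sqrt (w (lift ord0 i)).
have spos : forall i, 0 < s i by move=> i; rewrite sqrtr_gt0 phi_pos.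
have s2 : forall i, w (lift ord0 i) = s i ^+ 2.
  by move=> i; rewrite sqr_sqrtr // ltW // phi_pos.
have Dd : W1isqrt E phi = diag_mx (\row_i (s i)^-1) by [].
pose S := diag_mx (\row_i s i).
have DWD : W1isqrt E phi *m W1 *m (W1isqrt E phi)^T = 1%:M.
  rewrite Dd tr_diag_mx !mulmx_diag; apply/matrixP => i j; rewrite !mxE.
  have h : (s i)^-1 * w (lift ord0 i) * (s i)^-1 = 1.
    rewrite s2; have := spos i; rewrite lt0r => /andP[hs _]; field => //.
  by rewrite h.
have SS : S *m S^T = W1.
  rewrite tr_diag_mx !mulmx_diag; apply/matrixP => i j; rewrite !mxE.
  by rewrite s2 expr2.
have SD : S *m W1isqrt E phi = 1%:M.
  rewrite Dd !mulmx_diag; apply/matrixP => i j; rewrite !mxE.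
  have := spos i; rewrite lt0r => /andP[hs _].
  by rewrite mulfV.
have blockF : forall (a : 'cV[R]_n) (X : 'M[R]_(n, N)),
    row_mx a X *m Wmx E phi *m (row_mx a X)^T = a *m a^T + X *m W1 *m X^T.
  move=> a X.
  rewrite Wd tr_row_mx.
  change (@mulmx R n (1 + N) n (@mulmx R n (1 + N) (1 + N) (row_mx a X) (block_mx 1%:M 0 0 W1)) (col_mx a^T X^T) = a *m a^T + X *m W1 *m X^T).
  rewrite mul_row_block !mulmx0 ?addr0 ?add0r mulmx1.
  by rewrite (mul_row_col a (X *m W1)).
have momeq : forall F : 'M[R]_(n, N.+1),
    Emx E (fun x => (F *m PhiV phi x) *m (F *m PhiV phi x)^T) = F *m Wmx E phi *m F^T.
  move=> F.
  transitivity (Emx E (fun x => F *m (PhiV phi x *m (PhiV phi x)^T) *m F^T)).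
    by congr Emx; apply: functional_extensionality => x; rewrite trmx_mul !mulmxA.
  by rewrite Emx_mulr // Emx_mull.
have mean : forall (a : 'cV[R]_n) (X : 'M[R]_(n, N)),
    Emx E (fun x => row_mx a X *m PhiV phi x) = a.
  by move=> a X; rewrite Emx_mull // Eph mul_row_col mulmx1 mulmx0 addr0.
split.
  move=> U hU F; split; [|split].
  - by rewrite /F /PCcoef mean.
  - exact: momeq.
  - rewrite /F /PCcoef blockF.
    rewrite !trmx_mul !mulmxA -(mulmxA (L *m U) (W1isqrt E phi)) -(mulmxA (L *m U)) DWD.
    by rewrite mulmx1 -(mulmxA L U) hU mulmx1 hL addrC subrK.
move=> F h1 h2.
have [F0 [F1 hF]] : exists F0 F1, F = row_mx F0 F1 :> 'M[R]_(n, 1 + N).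
  by exists (lsubmx (F : 'M[R]_(n, 1 + N))), (rsubmx (F : 'M[R]_(n, 1 + N))); rewrite hsubmxK.
subst F.
rewrite mean in h1; rewrite momeq blockF h1 in h2.
have h3 : F1 *m W1 *m F1^T = L *m L^T.
  by apply: (addrI (Ef *m Ef^T)); rewrite h2 hL addrC subrK.
pose G := F1 *m S.
have hG : G *m G^T = (L *m (pid_mx n : 'M[R]_(n, N))) *m (L *m (pid_mx n : 'M[R]_(n, N)))^T.
  rewrite /G trmx_mul mulmxA -(mulmxA F1) SS h3.
  by rewrite trmx_mul tr_pid_mx mulmxA -(mulmxA L) pid_mx_id // pid_mx_1 mulmx1.
have [Q [hQ hGQ]] := gram_orth hG.
exists ((pid_mx n : 'M[R]_(n, N)) *m Q); split.
  by rewrite trmx_mul mulmxA -(mulmxA (pid_mx n)) hQ mulmx1 tr_pid_mx pid_mx_id // pid_mx_1.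
rewrite /PCcoef -h1 (_ : L *m _ *m _ = F1) //.
by rewrite mulmxA -hGQ /G -mulmxA SD mulmx1.
Qed.
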